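(* Let $k_+,k_-,t$ be integers with $0\leq k_-\leq k_+$, $k_++k_-\geq 1$ and $t>0$, and let $M\triangleq[-k_-,k_+]^*$. For every real $0<\epsilon<1/t$ there is a number $\lambda$, depending only on $t$ and $\epsilon$ (and not on $N$), such that for every sufficiently large integer $N$ with $\gcd(N,k_+!)=1$, setting $G\triangleq\mathbb{Z}_N$, there exists a subset $S=\{s_1,s_2,\dots, s_n\}\subseteq G$ with $\frac{1}{2}N^{1/t-\epsilon}\leq n \leq \frac{3}{2}N^{1/t-\epsilon}$ such that $G \overset{\lambda}{\geq} M \diamond_t S$.
   Context: $[a,b]^*=\{a,a+1,\dots,b\}\setminus\{0\}$. For a finite Abelian group $G$, a finite set $M\subseteq\mathbb{Z}\setminus\{0\}$ and $S=\{s_1,\dots,s_n\}\subseteq G$, we write $G \overset{\lambda}{\geq} M\diamond_t S$ if every element $g\in G$ can be written in at most $\lambda$ ways as a linear combination of at most $t$ elements of $S$ with coefficients from $M\cup\{0\}$, i.e., the number of vectors $\mathbf{e}\in(M\cup\{0\})^n$ with Hamming weight at most $t$ and $\sum_i e_is_i=g$ is at most $\lambda$. *)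

(* Defs.v *)
From mathcomp Require Import all_boot all_order all_algebra.
From Stdlib Require Reals.
Set Implicit Arguments. Unset Strict Implicit. Unset Printing Implicit Defensive.
Import GRing.Theory Num.Theory.
Local Open Scope ring_scope.

Definition Mset (km kp : nat) : pred int :=
  fun a => (- (km%:Z) <= a <= kp%:Z) && (a != 0).

Definition hweight (n : nat) (e : {ffun 'I_n -> int}) : nat :=
  #|[set i | e i != 0]|.

Definition lincomb (G : zmodType) (s : seq G) (e : {ffun 'I_(size s) -> int}) : G :=
  \sum_(i < size s) s`_i *~ e i.

Definition admissible (M : pred int) (t : nat) (n : nat)
    (e : {ffun 'I_n -> int}) : bool :=
  [forall i, (e i == 0) || (e i \in M)] && (hweight e <= t)%N.

(* G >=^lambda M <>_t S, where S = {s_1,...,s_n} is given by the duplicate-free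
   sequence s: every g has at most lambda admissible vectors e with sum e_i s_i = g. *)
Arguments lincomb {G} s e.
Arguments admissible M t {n} e.

Definition packing (G : zmodType) (lambda : nat) (M : pred int) (t : nat)
    (s : seq G) : Prop :=
  forall (g : G) (E : seq {ffun 'I_(size s) -> int}),
    uniq E ->
    (forall e, e \in E -> admissible M t e /\ lincomb s e = g) ->
    (size E <= lambda)%N.

(* Main.v *)
Require Import Defs.
From mathcomp Require Import all_boot all_order all_algebra.
From Stdlib Require Reals.
From mathcomp Require Import all_boot all_order all_algebra zify.
Set Implicit Arguments. Unset Strict Implicit. Unset Printing Implicit Defensive.
Import GRing.Theory Num.Theory.
Local Open Scope ring_scope.

Section ZN.
Variable N : nat.
Hypothesis hN : (1 < N)%N.

Lemma ZN_lt (a : 'Z_N) : (val a < N)%N.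
Proof. by have := ltn_ord a; rewrite [X in (_ < X)%N -> _]Zp_cast. Qed.

Lemma ZN_card : #|'Z_N| = N.
Proof. by rewrite card_ord Zp_cast. Qed.

Lemma ZN_mulrn (a : 'Z_N) (m : nat) : val (a *+ m) = ((val a * m) %% N)%N.
Proof. by rewrite Zp_mulrn /= [X in (_ %% X)%N]Zp_cast. Qed.

Lemma mulrz_eq0_nat (a : 'Z_N) (x : int) : a *~ x = 0 -> a *+ `|x|%N = 0.
Proof.
case: x => m /=; first by rewrite -pmulrn.
by rewrite NegzE mulrNz -pmulrn => /eqP; rewrite oppr_eq0 => /eqP.
Qed.

Lemma mulrz_inj (kp : nat) (a b : 'Z_N) (x : int) :
  coprime N kp`! -> x != 0 -> (`|x| <= kp)%N -> a *~ x = b *~ x -> a = b.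
Proof.
move=> cop x0 xk /eqP; rewrite -subr_eq0 -mulrzBl => /eqP /mulrz_eq0_nat h.
apply/eqP; rewrite -subr_eq0; apply/eqP.
move: h; set c := a - b => h.
have hm : (0 < `|x|)%N by rewrite absz_gt0.
have dv : (`|x| %| kp`!)%N by apply: dvdn_fact; rewrite hm xk.
have cop2 : coprime N `|x| by apply: coprime_dvdr dv cop.
have : (N %| val c * `|x|)%N.
  by rewrite /dvdn -ZN_mulrn h.
rewrite Gauss_dvdl // => /dvdnP [q hq].
apply/val_inj => /=.
have := ZN_lt c; rewrite hq.
case: q hq => // q _; rewrite mulSn => h2.
by exfalso; move: h2; rewrite ltnNge leq_addr.
Qed.

Lemma mulrn_div_inj (c : nat) (x y : 'Z_N) : (0 < c)%N ->
  x *+ c = y *+ c -> ((val x * c) %/ N = (val y * c) %/ N)%N -> x = y.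
Proof.
move=> c0 /(congr1 val); rewrite !ZN_mulrn => hm hd.
apply/val_inj; apply/eqP; rewrite -(eqn_pmul2r c0); apply/eqP.
by rewrite (divn_eq (val x * c) N) (divn_eq (val y * c) N) hm hd.
Qed.


Variable n : nat.

Definition lin (f : {ffun 'I_n -> 'Z_N}) (e : {ffun 'I_n -> int}) : 'Z_N :=
  \sum_i f i *~ e i.

Lemma lin_diff f f' p q :
  (lin f p - lin f q) - (lin f' p - lin f' q) =
  \sum_i (f i - f' i) *~ (p i - q i).
Proof.
have h g : lin g p - lin g q = \sum_i g i *~ (p i - q i).
  by rewrite /lin -sumrB; apply: eq_bigr => j _; rewrite mulrzBr.
rewrite !h -sumrB; apply: eq_bigr => j _; by rewrite mulrzBl.
Qed.

Lemma ffun_neq_ex (T : finType) (U : eqType) (p q : {ffun T -> U}) :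
  p != q -> exists i, p i != q i.
Proof.
move=> pq; apply/existsP; apply: contraR pq => /existsPn h.
by apply/eqP/ffunP => i; apply/eqP; rewrite -[_ == _]negbK h.
Qed.

Lemma card_pffun0 (D : {pred 'I_n}) :
  #|[set g : {ffun 'I_n -> 'Z_N} | g \in pffun_on 0 D predT]| = (N ^ #|D|)%N.
Proof.
rewrite cardsE card_pffun_on; congr (_ ^ _)%N.
exact: ZN_card.
Qed.

Lemma count_pair (B : nat) (p q : {ffun 'I_n -> int}) : p != q ->
  (forall i, `|p i - q i| <= B)%N ->
  (#|[set f : {ffun 'I_n -> 'Z_N} | lin f p == lin f q]| <= B.+1 * N ^ n.-1)%N.
Proof.
move=> pq hB; have [i hi] := ffun_neq_ex pq.
set c := `|p i - q i|%N.
have c0 : (0 < c)%N by rewrite absz_gt0 subr_eq0.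
pose F (f : {ffun 'I_n -> 'Z_N}) :=
  ([ffun j => if j == i then 0 else f j],
   (inord ((val (f i) * c) %/ N) : 'I_B.+1)).
set A := [set f | _].
have hdiv (x : 'Z_N) : ((val x * c) %/ N < B.+1)%N.
  rewrite ltnS; apply: leq_trans (hB i); apply: ltnW.
  rewrite ltn_divLR ?(ltn_trans _ hN) //.
  by rewrite [X in (_ < X)%N]mulnC ltn_pmul2r // ZN_lt.
have inj : {in A &, injective F}.
  move=> f f'; rewrite !inE => /eqP hf /eqP hf' [] /ffunP h1 /(congr1 val).
  rewrite /= !inordK ?hdiv // => h2.
  have hoff j : j != i -> f j = f' j.
    by move=> ji; have := h1 j; rewrite !ffunE (negbTE ji).
  have key : (f i - f' i) *~ (p i - q i) = 0.
    have := lin_diff f f' p q; rewrite hf hf' !subrr => /esym.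
    rewrite (bigD1 i) //= big1 ?addr0 // => j ji.
    by rewrite hoff // subrr mul0rz.
  have := mulrz_eq0_nat key; rewrite mulrnBl => /eqP; rewrite subr_eq0 => /eqP h3.
  have hi' := mulrn_div_inj c0 h3 h2.
  by apply/ffunP => j; case: (eqVneq j i) => [->|ji]; [exact: hi'|exact: hoff].
rewrite -(card_in_imset inj).
have sub : [set F x | x in A] \subset setX [set g : {ffun 'I_n -> 'Z_N} | g \in pffun_on 0 (predC1 i) predT] [set: 'I_B.+1].
  apply/subsetP => x /imsetP [f _ ->].
  rewrite inE /= !inE andbT; apply/pffun_onP; split.
    by apply/subsetP => j; rewrite inE ffunE !inE; case: (j == i); rewrite ?eqxx.
  by move=> y _.
apply: leq_trans (subset_leq_card sub) _.
by rewrite cardsX card_pffun0 cardsT card_ord cardC1 card_ord mulnC.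
Qed.


Lemma count_chain (kp m : nat) (P : 'I_m.+1 -> {ffun 'I_n -> int})
    (piv : 'I_m.+1 -> 'I_n) :
  coprime N kp`! ->
  (forall j i, `|P j i| <= kp)%N ->
  (forall j : 'I_m.+1, (0 < j)%N -> P j (piv j) != 0) ->
  (forall j l : 'I_m.+1, (0 < j)%N -> (l < j)%N -> P l (piv j) = 0) ->
  (#|[set f | [forall j, lin f (P j) == lin f (P ord0)]]| <= N ^ (n - m))%N.
Proof.
move=> cop hb h1 h2.
set J := [pred j : 'I_m.+1 | (0 < j)%N].
set Piv := [set piv j | j in J].
have pinj : {in J &, injective piv}.
  move=> j j'; rewrite !inE => j0 j'0 e.
  case: (ltngtP j j') => [lt|lt|/val_inj //].
    by have := h1 j j0; rewrite e h2.
  by have := h1 j' j'0; rewrite -e h2.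
have cPiv : #|Piv| = m.
  rewrite card_in_imset //.
  have -> : #|J| = #|predC1 (ord0 : 'I_m.+1)|.
    by apply: eq_card => j; rewrite !inE lt0n.
  by rewrite cardC1 card_ord.
pose F (f : {ffun 'I_n -> 'Z_N}) := [ffun i => if i \in Piv then 0 else f i].
set A := [set f | _].
have inj : {in A &, injective F}.
  move=> f f'; rewrite !inE => /forallP hf /forallP hf' /ffunP hF.
  apply/eqP; apply/negPn/negP => /ffun_neq_ex [i hi].
  have iP : i \in Piv.
    by apply: contraR hi => iP; have := hF i; rewrite !ffunE (negbTE iP) => ->.
  case/imsetP: iP => j0 j0J ei.
  set D := [pred j : 'I_m.+1 | (0 < j)%N && (f (piv j) != f' (piv j))].
  have Dj0 : D j0 by rewrite /D /= -ei hi andbT; exact: j0J.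
  case: (arg_minnP val Dj0) => jm /andP [jm0 Djm] jmin.
  have key : \sum_i (f i - f' i) *~ (P jm i - P ord0 i) = 0.
    by rewrite -lin_diff (eqP (hf jm)) (eqP (hf' jm)) !subrr.
  move: key; rewrite (bigD1 (piv jm)) //= big1 ?addr0.
    rewrite (h2 jm ord0) // subr0 => /eqP; rewrite -(mul0rz _ (P jm (piv jm))).
    by move=> /eqP /(mulrz_inj cop (h1 jm jm0) (hb _ _)) /eqP; rewrite subr_eq0 (negbTE Djm).
  move=> k ipj.
  case: (eqVneq (f k) (f' k)) => [->|fi]; first by rewrite subrr mul0rz.
  have iP : k \in Piv.
    by apply: contraR fi => iP; have := hF k; rewrite !ffunE (negbTE iP) => ->.
  case/imsetP: iP => l lJ el.
  have Dl : D l by rewrite /D /= -el fi andbT; exact: lJ.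
  have := jmin l Dl; rewrite leq_eqVlt => /orP [/eqP/val_inj ejl|ltl].
    by move: ipj; rewrite el ejl eqxx.
  by rewrite el (h2 l jm lJ ltl) (h2 l ord0 lJ lJ) subrr mulr0z.
rewrite -(card_in_imset inj).
have sub : [set F x | x in A] \subset [set g : {ffun 'I_n -> 'Z_N} | g \in pffun_on 0 (~: Piv) predT].
  apply/subsetP => x /imsetP [f _ ->].
  rewrite inE; apply/pffun_onP; split; last by move=> y _.
  by apply/subsetP => j; rewrite inE ffunE !inE; case: (j \in Piv); rewrite ?eqxx.
apply: leq_trans (subset_leq_card sub) _.
rewrite card_pffun0.
have -> : #|~: Piv| = (n - m)%N by rewrite -cPiv cardsCs setCK card_ord.
by [].
Qed.

End ZN.

Lemma sum_nat_bool (T : finType) (P : pred T) : (\sum_x (P x : nat))%N = #|P|.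
Proof. by rewrite -sum1_card [RHS]big_mkcond; apply: eq_bigr => x _; rewrite unfold_in; case: (P x). Qed.

Section Codes.
Variable N : nat.
Hypothesis hN : (1 < N)%N.
Variables n t km kp m0 : nat.
Variable i0 : 'I_n.
Hypothesis hk : (km <= kp)%N.
Hypothesis cop : coprime N kp`!.

Local Notation K := (km + kp).+1.
Definition Idx := {ffun 'I_t -> 'I_n}.
Definition Val := {ffun 'I_t -> 'I_K}.

Definition dec (ix : Idx) (v : Val) : {ffun 'I_n -> int} :=
  [ffun i => if [pick j | ix j == i] is Some j then (v j)%:Z - km%:Z else 0].

Lemma dec_range ix v i : (- (km%:Z) <= dec ix v i <= kp%:Z).
Proof.
rewrite ffunE; case: pickP => [j _|_].
  have := ltn_ord (v j); rewrite ltnS => hv.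
  apply/andP; split; lia.
lia.
Qed.

Lemma dec_abs ix v i : (`|dec ix v i| <= kp)%N.
Proof.
have /andP [h1 h2] := dec_range ix v i.
move: h1 h2; lia.
Qed.

Lemma dec_diff ix v ix' v' i : (`|dec ix v i - dec ix' v' i| <= km + kp)%N.
Proof.
have /andP [h1 h2] := dec_range ix v i.
have /andP [h3 h4] := dec_range ix' v' i.
move: h1 h2 h3 h4; lia.
Qed.


Definition eventA (c : Idx * Val * Val) (f : {ffun 'I_n -> 'Z_N}) : bool :=
  (dec c.1.1 c.1.2 != dec c.1.1 c.2) &&
  (lin f (dec c.1.1 c.1.2) == lin f (dec c.1.1 c.2)).

Definition chainb (P : 'I_m0.+1 -> {ffun 'I_n -> int}) : bool :=
  [forall j : 'I_m0.+1, (val j == 0%N) ||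
     [exists i, (P j i != 0) && [forall l : 'I_m0.+1, (l < j)%N ==> (P l i == 0)]]].

Definition Pd (c : {ffun 'I_m0.+1 -> Idx * Val}) (j : 'I_m0.+1) := dec (c j).1 (c j).2.

Definition eventB (c : {ffun 'I_m0.+1 -> Idx * Val}) (f : {ffun 'I_n -> 'Z_N}) : bool :=
  chainb (Pd c) && [forall j, lin f (Pd c j) == lin f (Pd c ord0)].

Lemma countA c : (#|[set f | eventA c f]| <= K * N ^ n.-1)%N.
Proof.
rewrite /eventA; case: (eqVneq (dec c.1.1 c.1.2) (dec c.1.1 c.2)) => [_|ne].
  by rewrite (eq_card0 (_ : _ =i pred0)) // => f; rewrite !inE.
apply: leq_trans (count_pair hN (B := (km + kp)%N) ne (fun i => dec_diff _ _ _ _ _)).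
by apply: subset_leq_card; apply/subsetP => f; rewrite !inE.
Qed.

Lemma countB c : (#|[set f | eventB c f]| <= N ^ (n - m0))%N.
Proof.
rewrite /eventB; case hc: (chainb (Pd c)); last first.
  by rewrite (eq_card0 (_ : _ =i pred0)) // => f; rewrite !inE.
pose piv (j : 'I_m0.+1) := odflt i0 [pick i | (Pd c j i != 0) &&
     [forall l : 'I_m0.+1, (l < j)%N ==> (Pd c l i == 0)]].
have hpiv (j : 'I_m0.+1) : (0 < j)%N -> (Pd c j (piv j) != 0) &&
     [forall l : 'I_m0.+1, (l < j)%N ==> (Pd c l (piv j) == 0)].
  move=> j0; move/forallP: hc => /(_ j); rewrite eqn0Ngt j0 /= => /existsP [i hi].
  by rewrite /piv; case: pickP => [i' -> //|/(_ i)]; rewrite hi.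
apply: leq_trans (count_chain hN cop (P := Pd c) (piv := piv) _ _ _); last first.
- move=> j l j0 lj; have /andP [_ /forallP /(_ l)] := hpiv j j0.
  by rewrite lj => /eqP.
- by move=> j j0; case/andP: (hpiv j j0).
- by move=> j i; apply: dec_abs.
by apply: subset_leq_card; apply/subsetP => f; rewrite !inE => /andP [].
Qed.

Lemma exists_good :
  (#|{: Idx * Val * Val}| * (K * N ^ n.-1) +
   #|{: {ffun 'I_m0.+1 -> Idx * Val}}| * N ^ (n - m0) < N ^ n)%N ->
  exists f : {ffun 'I_n -> 'Z_N},
    [forall c, ~~ eventA c f] && [forall c, ~~ eventB c f].
Proof.
move=> hlt; apply/existsP; apply: contraLR hlt => /existsPn hbad.
rewrite -leqNgt.
have -> : (N ^ n = \sum_(f : {ffun 'I_n -> 'Z_N}) 1)%N.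
  by rewrite sum1_card card_ffun (ZN_card hN) card_ord.
apply: leq_trans (_ : (\sum_(f : {ffun 'I_n -> 'Z_N})
   (\sum_c (eventA c f : nat) + \sum_c (eventB c f : nat)) <= _)%N).
  apply: leq_sum => f _; have := hbad f; rewrite negb_and => /orP [] /forallPn [c].
    by rewrite negbK => e; rewrite (bigD1 c) //= e -addnA leq_addr.
  by rewrite negbK => e; rewrite addnC (bigD1 c) //= e -addnA leq_addr.
rewrite big_split /= exchange_big [X in (_ + X)%N]exchange_big /=.
apply: leq_add.
  rewrite -sum1_card big_distrl /=. 
  apply: leq_sum => c _; rewrite mul1n sum_nat_bool.
  by apply: leq_trans (countA c); apply: subset_leq_card; apply/subsetP => f; rewrite !inE.
rewrite -sum1_card big_distrl /=.
apply: leq_sum => c _; rewrite mul1n sum_nat_bool.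
by apply: leq_trans (countB c); apply: subset_leq_card; apply/subsetP => f; rewrite !inE.
Qed.


Definition packingF (lam : nat) (M : pred int) (f : {ffun 'I_n -> 'Z_N}) :=
  forall g (E : seq {ffun 'I_n -> int}), uniq E ->
    (forall e, e \in E -> admissible M t e /\ lin f e = g) -> (size E <= lam)%N.

Definition supp (e : {ffun 'I_n -> int}) : {set 'I_n} := [set i | e i != 0].

Definition enc (x : int) : 'I_K := inord (absz (x + km%:Z)).

Lemma encK x : - (km%:Z) <= x <= kp%:Z -> (enc x)%:Z - km%:Z = x.
Proof.
move=> /andP [h1 h2]; rewrite /enc inordK; first by lia.
by rewrite ltnS; lia.
Qed.

Definition ixOf (S : {set 'I_n}) : Idx := [ffun j : 'I_t => nth i0 (enum S) j].

Lemma ixOf_cover (S : {set 'I_n}) : (#|S| <= t)%N -> forall i, i \in S -> exists j, ixOf S j = i.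
Proof.
move=> hS i iS.
have hi : (index i (enum S) < t)%N.
  by apply: leq_trans hS; rewrite cardE index_mem mem_enum.
by exists (Ordinal hi); rewrite ffunE /= nth_index // mem_enum.
Qed.

Lemma dec_enc (ix : Idx) (e : {ffun 'I_n -> int}) :
  (forall i, - (km%:Z) <= e i <= kp%:Z) ->
  (forall i, e i != 0 -> exists j, ix j = i) ->
  dec ix [ffun j => enc (e (ix j))] = e.
Proof.
move=> hr hc; apply/ffunP => i; rewrite !ffunE.
case: pickP => [j /eqP <-|hn]; first by rewrite ffunE encK.
case: (eqVneq (e i) 0) => [-> //|ne].
by have [j ej] := hc i ne; have := hn j; rewrite ej eqxx.
Qed.

Lemma adm_range (e : {ffun 'I_n -> int}) : admissible (Mset km kp) t e -> forall i, - (km%:Z) <= e i <= kp%:Z.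
Proof.
case/andP => /forallP h _ i; have := h i; case/orP => [/eqP ->|].
  by apply/andP; split; lia.
by rewrite /Mset unfold_in => /andP [].
Qed.

Lemma adm_weight (e : {ffun 'I_n -> int}) : admissible (Mset km kp) t e -> (#|supp e| <= t)%N.
Proof. by case/andP. Qed.

Lemma code_of (e : {ffun 'I_n -> int}) : admissible (Mset km kp) t e ->
  dec (ixOf (supp e)) [ffun j => enc (e (ixOf (supp e) j))] = e.
Proof.
move=> ha; apply: dec_enc; first exact: adm_range.
by move=> i ne; apply: ixOf_cover; [exact: adm_weight|rewrite inE].
Qed.

Section Good.
Variable f : {ffun 'I_n -> 'Z_N}.
Hypothesis gA : forall c, ~~ eventA c f.
Hypothesis gB : forall c, ~~ eventB c f.
Variable g : 'Z_N.
Variable E : seq {ffun 'I_n -> int}.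
Hypothesis uE : uniq E.
Hypothesis hE : forall e, e \in E -> admissible (Mset km kp) t e /\ lin f e = g.

Lemma supp_inj : {in E &, injective supp}.
Proof.
move=> p q pE qE sp; apply/eqP; apply/negPn/negP => pq.
have [ap lp] := hE pE; have [aq lq] := hE qE.
set ix := ixOf (supp p).
have dp : dec ix [ffun j => enc (p (ix j))] = p by exact: code_of.
have dq : dec ix [ffun j => enc (q (ix j))] = q.
  apply: dec_enc; first exact: adm_range.
  by move=> i ne; apply: ixOf_cover; [exact: adm_weight|rewrite sp inE].
have := gA (ix, [ffun j => enc (p (ix j))], [ffun j => enc (q (ix j))]).
by rewrite /eventA /= dp dq pq lp lq eqxx.
Qed.

Definition e0 : {ffun 'I_n -> int} := [ffun _ => 0].

Definition Ucs (cs : seq {ffun 'I_n -> int}) : {set 'I_n} :=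
  [set i : 'I_n | has (fun p : {ffun 'I_n -> int} => p i != 0) cs].

Lemma card_Ucs cs : (#|Ucs cs| <= \sum_(p <- cs) #|supp p|)%N.
Proof.
elim: cs => [|p cs IH]; first by rewrite big_nil (eq_card0 (_ : _ =i pred0)) // => i; rewrite !inE.
have -> : Ucs (p :: cs) = supp p :|: Ucs cs by apply/setP => i; rewrite !inE.
rewrite big_cons; apply: leq_trans (leq_card_setU _ _).1 _.
by rewrite leq_add2l.
Qed.

Definition chainP (cs : seq {ffun 'I_n -> int}) :=
  forall j, (0 < j < size cs)%N -> exists i, nth e0 cs j i != 0 /\
    forall l, (l < j)%N -> nth e0 cs l i = 0.

Hypothesis big : (2 ^ (m0 * t) < size E)%N.

Lemma chain_grow j : (j <= m0)%N -> exists cs, [/\ size cs = j.+1, {subset cs <= E} & chainP cs].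
Proof.
elim: j => [_|j IH hj].
  case: E big => [//|e E'] _.
  exists [:: e]; split => //; first by move=> x; rewrite inE => /eqP ->; rewrite inE eqxx.
  by move=> j /andP [h1 h2]; move: h1 h2; case: j.
have [cs [sc scE cP]] := IH (ltnW hj).
case: (boolP (has (fun e => ~~ (supp e \subset Ucs cs)) E)) => [/hasP [e eE /subsetPn [i ie iU]]|hn].
  exists (rcons cs e); split.
  - by rewrite size_rcons sc.
  - by move=> x; rewrite mem_rcons inE => /orP [/eqP ->|/scE].
  move=> j' /andP [j'0]; rewrite size_rcons ltnS leq_eqVlt => /orP [/eqP ej|lj].
    exists i; rewrite nth_rcons ej ltnn eqxx; split; first by move: ie; rewrite inE.
    move=> l ll; rewrite nth_rcons ll.
    apply/eqP; apply: contraR iU => nz; rewrite inE; apply/hasP.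
    by exists (nth e0 cs l) => //; apply: mem_nth.
  have [i' [h1 h2]] : exists i, nth e0 cs j' i != 0 /\ forall l, (l < j')%N -> nth e0 cs l i = 0 by apply: cP; rewrite j'0 lj.
  exists i'; rewrite nth_rcons lj; split => // l ll.
  by rewrite nth_rcons (ltn_trans ll lj) h2.
exfalso; move: big; apply/negP; rewrite -leqNgt.
have sub : {subset map supp E <= powerset (Ucs cs)}.
  move=> S /mapP [e eE ->]; rewrite inE.
  by move/hasPn: hn => /(_ e eE); rewrite negbK.
have um : uniq (map supp E) by rewrite (map_inj_in_uniq supp_inj).
rewrite -(size_map supp) -(card_uniqP um).
apply: leq_trans (subset_leq_card (_ : mem (map supp E) \subset mem (powerset (Ucs cs)))) _.
  by apply/subsetP.
rewrite card_powerset leq_pexp2l //.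
apply: leq_trans (card_Ucs cs) _.
apply: (@leq_trans (\sum_(p <- cs) t)).
  rewrite big_seq [X in (X <= _)%N]big_seq; apply: leq_sum => p pc.
  by apply: adm_weight; case: (hE (scE _ pc)).
by rewrite big_const_seq iter_addn_0 count_predT sc mulnC leq_mul2r hj orbT.
Qed.


Lemma no_big : False.
Proof.
have [cs [sc scE cP]] := chain_grow (leqnn m0).
pose c : {ffun 'I_m0.+1 -> Idx * Val} := [ffun j : 'I_m0.+1 =>
  (ixOf (supp (nth e0 cs j)), [ffun k => enc (nth e0 cs j (ixOf (supp (nth e0 cs j)) k))])].
have inE' (j : 'I_m0.+1) : nth e0 cs j \in E.
  by apply: scE; apply: mem_nth; rewrite sc.
have hPd j : Pd c j = nth e0 cs j.
  by rewrite /Pd ffunE /=; apply: code_of; case: (hE (inE' j)).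
apply: (negP (gB c)); apply/andP; split.
  apply/forallP => j; case: (posnP j) => [-> //|j0].
  have [i [h1 h2]] : exists i, nth e0 cs j i != 0 /\ forall l, (l < j)%N -> nth e0 cs l i = 0.
    by apply: cP; rewrite j0 sc ltn_ord.
  apply/orP; right; apply/existsP; exists i; rewrite hPd h1 /=.
  by apply/forallP => l; apply/implyP => lj; rewrite hPd h2.
apply/forallP => j; rewrite !hPd.
by have [_ ->] := hE (inE' j); have [_ ->] := hE (inE' ord0).
Qed.

End Good.

Lemma packing_good (f : {ffun 'I_n -> 'Z_N}) :
  (forall c, ~~ eventA c f) -> (forall c, ~~ eventB c f) ->
  packingF (2 ^ (m0 * t)) (Mset km kp) f.
Proof.
move=> gA gB g E uE hE; rewrite leqNgt; apply/negP => big.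
exact: (no_big gA gB uE hE big).
Qed.

End Codes.

Section Transfer.
Variable N : nat.
Hypothesis hN : (1 < N)%N.
Variables n t km kp lam : nat.
Variable i0 : 'I_n.
Hypothesis ht : (0 < t)%N.
Hypothesis hkp : (1 <= kp)%N.
Variable f : {ffun 'I_n -> 'Z_N}.
Hypothesis hp : packingF t lam (Mset km kp) f.

Definition delta (j : 'I_n) : {ffun 'I_n -> int} := [ffun i => ((i == j) : nat)%:Z].

Lemma delta_inj : injective delta.
Proof.
move=> j j' /ffunP /(_ j); rewrite !ffunE eqxx.
by case: (eqVneq j j') => // _.
Qed.

Lemma fiber y : (#|[set i | f i == y]| <= lam)%N.
Proof.
rewrite cardE -(size_map delta).
apply: (hp (g := y)); first by rewrite (map_inj_uniq delta_inj) enum_uniq.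
move=> e /mapP [j]; rewrite mem_enum inE => /eqP fj ->; split.
  apply/andP; split.
    apply/forallP => i; rewrite ffunE; case: (i == j) => //=.
    by rewrite /Mset unfold_in /=; apply/andP; split => //; lia.
  rewrite /hweight (_ : [set i | delta j i != 0] = [set j]) ?cards1 //.
  by apply/setP => i; rewrite !inE ffunE; case: (i == j).
rewrite /lin (bigD1 j) //= big1 ?addr0; first by rewrite ffunE eqxx fj.
by move=> i ij; rewrite ffunE (negbTE ij) mulr0z.
Qed.

Definition Im := [set f i | i in 'I_n].

Lemma n_le : (n <= lam * #|Im|)%N.
Proof.
have -> : n = (\sum_(i in 'I_n) 1)%N by rewrite sum1_card card_ord.
rewrite (partition_big_imset f) /= -/Im mulnC -sum_nat_const.
apply: leq_sum => y _; rewrite sum1_card.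
apply: leq_trans (fiber y); apply: subset_leq_card; apply/subsetP => i.
by rewrite !inE.
Qed.

Section Seq.
Variable s : seq 'Z_N.
Hypothesis us : uniq s.
Hypothesis sIm : {subset s <= Im}.

Definition gi (i : 'I_(size s)) : 'I_n := odflt i0 [pick j | f j == s`_i].

Lemma f_gi i : f (gi i) = s`_i.
Proof.
rewrite /gi; case: pickP => [j /eqP //|hn].
have : s`_i \in Im by apply: sIm; apply: mem_nth.
by case/imsetP => j _ e; have := hn j; rewrite e eqxx.
Qed.

Lemma gi_inj : injective gi.
Proof.
move=> i i' e; have := congr1 f e; rewrite !f_gi => /eqP.
by rewrite nth_uniq // => /eqP /val_inj.
Qed.

Definition lift (e : {ffun 'I_(size s) -> int}) : {ffun 'I_n -> int} :=
  [ffun j => \sum_(i | gi i == j) e i].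

Lemma lift_at e i : lift e (gi i) = e i.
Proof.
rewrite ffunE (big_pred1 i) // => i'; rewrite /= inj_eq //; exact: gi_inj.
Qed.

Lemma lift_out e j : (forall i, gi i != j) -> lift e j = 0.
Proof. by move=> h; rewrite ffunE big_pred0 // => i; rewrite (negbTE (h i)). Qed.

Lemma lin_lift e : lin f (lift e) = lincomb s e.
Proof.
rewrite /lin /lincomb.
under eq_bigr => j _ do rewrite ffunE mulrz_sumr.
rewrite [RHS](partition_big gi predT) //=.
apply: eq_bigr => j _; apply: eq_bigr => i /eqP <-.
by rewrite f_gi.
Qed.

Lemma lift_adm M e : admissible M t e -> admissible M t (lift e).
Proof.
case/andP => /forallP h hw; apply/andP; split.
  apply/forallP => j; case: (pickP (fun i => gi i == j)) => [i /eqP <-|hn].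
    by rewrite lift_at.
  by rewrite lift_out // => i; rewrite hn.
apply: leq_trans hw; rewrite /hweight.
apply: leq_trans (leq_imset_card gi [set i | e i != 0]).
apply: subset_leq_card; apply/subsetP => j; rewrite inE.
case: (pickP (fun i => gi i == j)) => [i /eqP <-|hn].
  by rewrite lift_at => ne; apply/imsetP; exists i; rewrite ?inE.
by rewrite lift_out ?eqxx // => i; rewrite hn.
Qed.

Lemma transfer : packing lam (Mset km kp) t s.
Proof.
move=> g E uE hE.
rewrite -(size_map lift); apply: (hp (g := g)).
  rewrite (map_inj_uniq) // => e e' /ffunP h; apply/ffunP => i.
  by have := h (gi i); rewrite !lift_at.
move=> e' /mapP [e eE ->]; have [ha hl] := hE e eE; split.
  exact: lift_adm.
by rewrite lin_lift.
Qed.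

End Seq.
End Transfer.

Lemma nat_main N (hN : (1 < N)%N) t km kp m0 n0 :
  (0 < t)%N -> (km <= kp)%N -> (1 <= kp)%N -> coprime N kp`! -> (0 < n0)%N ->
  ((2 ^ (m0 * t) * n0) ^ t * (km + kp).+1 ^ t * (km + kp).+1 ^ t *
     ((km + kp).+1 * N ^ (2 ^ (m0 * t) * n0).-1) +
   ((2 ^ (m0 * t) * n0) ^ t * (km + kp).+1 ^ t) ^ m0.+1 *
     N ^ (2 ^ (m0 * t) * n0 - m0) < N ^ (2 ^ (m0 * t) * n0))%N ->
  exists s : seq 'Z_N, [/\ uniq s, size s = n0 & packing (2 ^ (m0 * t)) (Mset km kp) t s].
Proof.
move=> ht hk hkp cop n00 hlt.
set lam := (2 ^ (m0 * t))%N in hlt *.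
set n := (lam * n0)%N in hlt *.
have n0' : (0 < n)%N by rewrite muln_gt0 expn_gt0 n00.
pose i0 : 'I_n := Ordinal n0'.
have hex := exists_good (t := t) (m0 := m0) hN i0 hk cop.
case: hex => [|f /andP [hA hB]].
  by rewrite !card_prod !card_ffun !card_prod !card_ffun !card_ord.

have gA := forallP hA. have gB := forallP hB.
have hp := packing_good hN i0 hk cop gA gB.
have hIm := n_le hN ht hkp hp.
have le0 : (n0 <= #|Im f|)%N by rewrite -(@leq_pmul2l lam) ?expn_gt0.
exists (take n0 (enum (Im f))); split.
- by apply: take_uniq; apply: enum_uniq.
- rewrite size_take -cardE; case: ifP => // /negbT; rewrite -leqNgt => h.
  by apply/eqP; rewrite eqn_leq h le0.
apply: (transfer i0 hp); first by apply: take_uniq; apply: enum_uniq.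
by move=> x /mem_take; rewrite mem_enum.
Qed.


Lemma nat_glue a b N n m0 : (0 < N)%N -> (m0 <= n)%N -> (1 <= n)%N ->
  (2 * a < N)%N -> (2 * b < N ^ m0)%N -> (a * N ^ n.-1 + b * N ^ (n - m0) < N ^ n)%N.
Proof.
move=> N0 hm hn ha hb.
have e1 : (N ^ n = N * N ^ n.-1)%N by rewrite -expnS prednK.
have e2 : (N ^ n = N ^ m0 * N ^ (n - m0))%N by rewrite -expnD subnKC.
have p1 : (0 < N ^ n.-1)%N by rewrite expn_gt0 N0.
have p2 : (0 < N ^ (n - m0))%N by rewrite expn_gt0 N0.
have h1 : (2 * (a * N ^ n.-1) < N ^ n)%N by rewrite mulnA e1 ltn_pmul2r.
have h2 : (2 * (b * N ^ (n - m0)) < N ^ n)%N by rewrite mulnA e2 ltn_pmul2r.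
lia.
Qed.

From Stdlib Require Import Rdefinitions Raxioms RIneq Rfunctions Rpower Lra ZArith.

Section Real.
Local Close Scope ring_scope.
Local Open Scope R_scope.

Lemma INR_expn a b : INR (expn a b) = INR a ^ b.
Proof. elim: b => [|b IH]; first by rewrite expn0. by rewrite expnS mult_INR IH. Qed.

Lemma Rpower_pos x y : 0 < Rpower x y.
Proof. exact: Exp_prop.exp_pos. Qed.

Lemma thresh (C d M : R) : 0 < d -> 0 < C -> Rpower C (/ d) < M -> C < Rpower M d.
Proof.
move=> d0 C0 h.
have := Rlt_Rpower_l (Rpower C (/ d)) M d d0 (conj (Rpower_pos _ _) h).
by rewrite Rpower_mult Rinv_l ?Rpower_1 //; lra.
Qed.

Lemma up_nat X : 0 < X -> X < INR (Z.to_nat (up X)).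
Proof.
move=> X0; have [h1 h2] := archimed X.
have hz : (0 <= up X)%Z by apply: le_IZR; lra.
by rewrite INR_IZR_INZ Z2Nat.id.
Qed.

Lemma Ppow (Nr a : R) (t : nat) : 0 < Nr -> Rpower Nr a ^ t = Rpower Nr (a * INR t).
Proof. by move=> N0; rewrite -Rpower_pow ?Rpower_mult //; apply: Rpower_pos. Qed.

Lemma realA (t : nat) (eps Nr nr L Kc : R) :
  0 < INR t -> 0 < Nr -> 0 <= nr -> 0 <= Kc ->
  nr <= L * Rpower Nr (/ INR t - eps) ->
  Kc * L ^ t < Rpower Nr (INR t * eps) ->
  Kc * nr ^ t < Nr.
Proof.
move=> t0 N0 n0 K0 hn hK.
set P := Rpower Nr (/ INR t - eps).
have P0 : 0 < P ^ t by apply: pow_lt; apply: Rpower_pos.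
have h1 : nr ^ t <= L ^ t * P ^ t by rewrite -Rpow_mult_distr; apply: pow_incr; split.
have h2 : Kc * nr ^ t <= Kc * L ^ t * P ^ t by rewrite Rmult_assoc; apply: Rmult_le_compat_l.
have h3 : Kc * L ^ t * P ^ t < Rpower Nr (INR t * eps) * P ^ t by apply: Rmult_lt_compat_r.
have e : Rpower Nr (INR t * eps) * P ^ t = Nr.
  rewrite /P Ppow // -Rpower_plus.
  have -> : INR t * eps + (/ INR t - eps) * INR t = 1 by field; lra.
  exact: Rpower_1.
lra.
Qed.

Lemma realB (t m0 : nat) (eps Nr nr L Kc : R) :
  0 < INR t -> 0 < Nr -> 0 <= nr -> 0 <= Kc ->
  nr <= L * Rpower Nr (/ INR t - eps) ->
  Kc * (L ^ t) ^ m0.+1 < Rpower Nr ((INR m0 + 1) * INR t * eps - 1) ->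
  Kc * (nr ^ t) ^ m0.+1 < Nr ^ m0.
Proof.
move=> t0 N0 n0 K0 hn hK.
set P := Rpower Nr (/ INR t - eps).
have P0 : 0 < (P ^ t) ^ m0.+1 by apply: pow_lt; apply: pow_lt; apply: Rpower_pos.
have h1 : (nr ^ t) ^ m0.+1 <= (L ^ t) ^ m0.+1 * (P ^ t) ^ m0.+1.
  rewrite -Rpow_mult_distr; apply: pow_incr; split; first by apply: pow_le.
  by rewrite -Rpow_mult_distr; apply: pow_incr; split.
have h2 : Kc * (nr ^ t) ^ m0.+1 <= Kc * (L ^ t) ^ m0.+1 * (P ^ t) ^ m0.+1.
  by rewrite Rmult_assoc; apply: Rmult_le_compat_l.
have h3 : Kc * (L ^ t) ^ m0.+1 * (P ^ t) ^ m0.+1 <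
   Rpower Nr ((INR m0 + 1) * INR t * eps - 1) * (P ^ t) ^ m0.+1.
  by apply: Rmult_lt_compat_r.
have e : Rpower Nr ((INR m0 + 1) * INR t * eps - 1) * (P ^ t) ^ m0.+1 = Nr ^ m0.
  rewrite /P Ppow // -Rpower_pow; last exact: Rpower_pos.
  rewrite Rpower_mult -Rpower_plus -Rpower_pow //.
  congr Rpower; rewrite S_INR; field; lra.
lra.
Qed.


Lemma final_real : forall (t : nat), is_true (leq 1 t) ->
  forall eps : R, 0 < eps -> eps < / INR t ->
  exists lambda : nat, forall km kp : nat, is_true (leq km kp) ->
    is_true (leq 1 (addn kp km)) ->
  exists N0 : nat, forall N : nat, is_true (leq N0 N) -> is_true (leq 2 N) ->
    is_true (coprime N (factorial kp)) ->
    exists s : seq 'Z_N, uniq s /\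
      / 2 * Rpower (INR N) (/ INR t - eps) <= INR (size s) /\
      INR (size s) <= 3 / 2 * Rpower (INR N) (/ INR t - eps) /\
      packing lambda (Mset km kp) t s.
Proof.
move=> t ht eps e0 e1.
have t0 : 0 < INR t by apply: lt_0_INR; apply/ltP.
have te : 0 < INR t * eps by apply: Rmult_lt_0_compat.
set m0 := Z.to_nat (up (/ (INR t * eps))).
have hm0 : / (INR t * eps) < INR m0 by apply: up_nat; apply: Rinv_0_lt_compat.
have hm0' : 1 < INR m0 * (INR t * eps).
  have := Rmult_lt_compat_r _ _ _ te hm0; rewrite Rinv_l; lra.
set d := (INR m0 + 1) * INR t * eps - 1.
have d0 : 0 < d.
  have -> : d = INR m0 * (INR t * eps) + INR t * eps - 1 by rewrite /d; ring.
  lra.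
exists (expn 2 (muln m0 t)).
move=> km kp hk hk1.
have hkp : is_true (leq 1 kp) by lia.
set K := S (addn km kp).
set lam := expn 2 (muln m0 t).
set Kc1 := INR 2 * (INR K ^ t * INR K ^ t * INR K).
set Kc2 := INR 2 * (INR K ^ t) ^ m0.+1.
have Kpos : 0 < INR K by apply: lt_0_INR; apply/ltP.
have Lpos : 0 < INR lam by apply: lt_0_INR; apply/ltP; rewrite expn_gt0.
have Kc1p : 0 < Kc1 * INR lam ^ t.
  apply: Rmult_lt_0_compat; last by apply: pow_lt.
  apply: Rmult_lt_0_compat; first by apply: lt_0_INR; apply/ltP.
  by apply: Rmult_lt_0_compat; [apply: Rmult_lt_0_compat|]; try apply: pow_lt.
have Kc2p : 0 < Kc2 * (INR lam ^ t) ^ m0.+1.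
  apply: Rmult_lt_0_compat; last by apply: pow_lt; apply: pow_lt.
  apply: Rmult_lt_0_compat; first by apply: lt_0_INR; apply/ltP.
  by apply: pow_lt; apply: pow_lt.
have Kc1n : 0 <= Kc1.
  by rewrite /Kc1; repeat apply: Rmult_le_pos; try apply: pow_le; apply: pos_INR.
have Kc2n : 0 <= Kc2.
  by rewrite /Kc2; repeat apply: Rmult_le_pos; try apply: pow_le; try apply: pow_le; apply: pos_INR.
set X1 := Rpower (Kc1 * INR lam ^ t) (/ (INR t * eps)).
set X2 := Rpower (Kc2 * (INR lam ^ t) ^ m0.+1) (/ d).
exists (addn (Z.to_nat (up X1)) (Z.to_nat (up X2))).
move=> N hN0 hN cop.
have hX1 : X1 < INR N.
  apply: Rlt_le_trans (up_nat (Rpower_pos _ _)) _.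
  apply: le_INR; apply/leP; apply: leq_trans hN0; exact: leq_addr.
have hX2 : X2 < INR N.
  apply: Rlt_le_trans (up_nat (Rpower_pos _ _)) _.
  apply: le_INR; apply/leP; apply: leq_trans hN0; exact: leq_addl.
have N1 : 1 < INR N by apply: lt_1_INR; apply/ltP.
set P := Rpower (INR N) (/ INR t - eps).
have P1 : 1 <= P.
  rewrite /P -(Rpower_O (INR N)); last lra.
  apply: Rle_Rpower; lra.
have [u1 u2] := archimed P.
have uz : (1 < up P)%Z by apply: lt_IZR; lra.
set n0 := Z.to_nat (up P - 1).
have en0 : INR n0 = IZR (up P) - 1.
  by rewrite /n0 INR_IZR_INZ Z2Nat.id; [rewrite minus_IZR|lia].
have n0pos : is_true (leq 1 n0).
  apply/ltP; apply: INR_lt; rewrite en0 /=; lra.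
have hn0 : 1 <= INR n0 by rewrite -/(INR 1); apply: le_INR; apply/leP.
have hnP : INR (muln lam n0) <= INR lam * P.
  by rewrite mult_INR; apply: Rmult_le_compat_l; lra.
have hex := nat_main (m0 := m0) hN ht hk hkp cop n0pos.
case: hex => [|s [us ss hps]].
  rewrite mulnA; apply: nat_glue.
  - exact: ltnW.
  - apply: (@leq_trans (expn 2 m0)); first exact: ltnW (ltn_expl m0 (isT : is_true (leq 2 2))).
    apply: (@leq_trans (expn 2 (muln m0 t))); first by apply: leq_pexp2l => //; apply: leq_pmulr.
    exact: leq_pmulr.
  - by rewrite muln_gt0 expn_gt0.
  - apply/ltP; apply: INR_lt.
    have hA := realA (t:=t) (eps:=eps) (Nr:=INR N) (nr := INR (muln lam n0)) (L := INR lam) (Kc := Kc1) t0 ltac:(lra) (pos_INR _) Kc1n hnP (thresh te Kc1p hX1).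
    rewrite !mult_INR !INR_expn !mult_INR; rewrite !mult_INR in hA.
    apply: Rle_lt_trans hA; apply: Req_le; rewrite /Kc1 /lam /K; ring.
  - apply/ltP; apply: INR_lt.
    have hB := realB (t:=t) (m0 := m0) (eps:=eps) (Nr:=INR N) (nr := INR (muln lam n0)) (L := INR lam) (Kc := Kc2) t0 ltac:(lra) (pos_INR _) Kc2n hnP (thresh d0 Kc2p hX2).
    rewrite !(mult_INR, INR_expn); rewrite !(mult_INR, INR_expn) in hB.
    apply: Rle_lt_trans hB; apply: Req_le; rewrite /Kc2 /lam /K Rpow_mult_distr; ring.
exists s; rewrite ss; split => //; split; [lra|split => //; lra].
Qed.

End Real.

Local Close Scope ring_scope.
Delimit Scope nat_scope with N.

Theorem theorem15 :
  forall (t : nat), (0 < t)%N ->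
  forall eps : Rdefinitions.R,
    Rdefinitions.Rlt (Rdefinitions.IZR BinNums.Z0) eps ->
    Rdefinitions.Rlt eps (Rdefinitions.Rinv (Raxioms.INR t)) ->
  exists lambda : nat,
  forall km kp : nat, (km <= kp)%N -> (1 <= kp + km)%N ->
  exists N0 : nat, forall N : nat, (N0 <= N)%N -> (1 < N)%N ->
    coprime N (kp`!) ->
    exists s : seq 'Z_N, uniq s /\
      Rdefinitions.Rle
        (Rdefinitions.Rmult (Rdefinitions.Rinv (Rdefinitions.IZR (BinNums.Zpos (BinNums.xO BinNums.xH))))
           (Rpower.Rpower (Raxioms.INR N)
              (Rdefinitions.Rminus (Rdefinitions.Rinv (Raxioms.INR t)) eps)))
        (Raxioms.INR (size s)) /\
      Rdefinitions.Rle (Raxioms.INR (size s))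
        (Rdefinitions.Rmult
           (Rdefinitions.Rdiv (Rdefinitions.IZR (BinNums.Zpos (BinNums.xI BinNums.xH))) (Rdefinitions.IZR (BinNums.Zpos (BinNums.xO BinNums.xH))))
           (Rpower.Rpower (Raxioms.INR N)
              (Rdefinitions.Rminus (Rdefinitions.Rinv (Raxioms.INR t)) eps))) /\
      packing lambda (Mset km kp) t s.
Proof. exact: final_real. Qed.
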